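(* Let $X$ be a finite set, $t_1<\dots<t_M$ real numbers and $(\mathcal{P}^{t_m})_{m\le M}$ partitions of $X$. Then the persistent hierarchy satisfies $h(t)=1$ for all $t\ge t_1$ if and only if the sequence is strictly hierarchical, i.e. $\mathcal{P}^{t_1}\le\mathcal{P}^{t_2}\le\dots\le\mathcal{P}^{t_M}$.
   Context: A partition of $X$ is a collection of non-empty pairwise disjoint subsets (clusters) whose union is $X$; $\#\mathcal{P}$ is its number of clusters. $\mathcal{P}\le\mathcal{Q}$ means every cluster of $\mathcal{P}$ is contained in a cluster of $\mathcal{Q}$. For a finite non-empty set $C$, $\Delta C$ is the set of all non-empty subsets of $C$. The Multiscale Clustering Filtration is $K^{t_m}:=\bigcup_{l\le m}\bigcup_{C\in\mathcal{P}^{t_l}}\Delta C$. For $t\ge t_1$, let $m$ be the largest index with $t_m\le t$ and set $\mathcal{P}^t:=\mathcal{P}^{t_m}$, $K^t:=K^{t_m}$. Let $\beta_0^t$ be the number of connected components of $K^t$ (rank of $H_0(K^t)$). The persistent hierarchy is $h(t):=\beta_0^t/\#\mathcal{P}^t$ for $t\ge t_1$. *)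

(* Defs.v *)
From mathcomp Require Import all_boot all_order all_algebra.
From mathcomp Require Import reals.
Set Implicit Arguments. Unset Strict Implicit. Unset Printing Implicit Defensive.
Import Order.TTheory GRing.Theory Num.Theory.
Local Open Scope ring_scope.

(* The ground set X is the finite type T; a partition of X is a
   P : {set {set T}} with [partition P [set: T]] (finset.v: cover, pairwise
   disjoint, no empty block). Filtration indices are 'I_n.+1 (n.+1 = M >= 1). *)

Definition refines (T : finType) (P Q : {set {set T}}) : Prop :=
  forall C, C \in P -> exists2 D, D \in Q & C \subset D.

Section MCF.
Variables (R : realType) (T : finType) (n : nat).
Variables (t : 'I_n.+1 -> R) (P : 'I_n.+1 -> {set {set T}}).

(* largest index m with t_m <= x (meaningful for x >= t_1) *)
Definition cur_idx (x : R) : 'I_n.+1 :=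
  inord (\max_(i < n.+1 | t i <= x) (i : nat)).

(* 1-skeleton adjacency of K^{t_m}: x,y lie together in some simplex of K^{t_m},
   i.e. in a common cluster C of P^{t_l} for some l <= m. *)
Definition mcf_adj (m : 'I_n.+1) : rel T :=
  fun x y => [exists l : 'I_n.+1, ((l <= m)%N &&
               [exists C in P l, (x \in C) && (y \in C)])].

Definition mcf_components (m : 'I_n.+1) : {set {set T}} :=
  [set [set y | connect (mcf_adj m) x y] | x : T].

Definition beta0 (x : R) : nat := #|mcf_components (cur_idx x)|.

Definition nclusters (x : R) : nat := #|P (cur_idx x)|.

Definition hier (x : R) : R := (beta0 x)%:R / (nclusters x)%:R.

End MCF.

(* Main.v *)
Require Import Defs.
From mathcomp Require Import all_boot all_order all_algebra.
From mathcomp Require Import reals.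
Import Order.TTheory GRing.Theory Num.Theory.
Local Open Scope ring_scope.

Section Aux.
Variables (T : finType) (n : nat) (P : 'I_n.+1 -> {set {set T}}).
Hypothesis hP : forall i, partition (P i) [set: T].

Lemma cov i x : x \in cover (P i).
Proof. by case/and3P: (hP i) => /eqP -> _ _; rewrite inE. Qed.

Lemma triv i : trivIset (P i).
Proof. by case/and3P: (hP i). Qed.

Lemma adj_sym (m : 'I_n.+1) : symmetric (mcf_adj P m).
Proof.
move=> x y; apply/idP/idP => /existsP [l /andP [lm /existsP [C /and3P [CP xC yC]]]];
  apply/existsP; exists l; rewrite lm /=; apply/existsP; exists C; by rewrite CP xC yC.
Qed.

Lemma adj_same (m : 'I_n.+1) x y : pblock (P m) x = pblock (P m) y -> mcf_adj P m x y.
Proof.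
move=> e; apply/existsP; exists m; rewrite leqnn /=; apply/existsP.
exists (pblock (P m) x); rewrite pblock_mem ?cov //= mem_pblock cov /= e.
by rewrite mem_pblock cov.
Qed.

Lemma conn_same (m : 'I_n.+1) x y : pblock (P m) x = pblock (P m) y -> connect (mcf_adj P m) x y.
Proof. by move=> e; apply: connect1; apply: adj_same. Qed.

Lemma comp_P (m : 'I_n.+1) : (forall l : 'I_n.+1, (l <= m)%N -> refines (P l) (P m)) ->
  mcf_components P m = P m.
Proof.
move=> href.
have adjb x y : mcf_adj P m x y -> pblock (P m) x = pblock (P m) y.
  case/existsP => l /andP [lm /existsP [C /and3P [CP xC yC]]].
  have [D DP CD] := href l lm C CP.
  by rewrite (def_pblock (triv m) DP (subsetP CD x xC)) (def_pblock (triv m) DP (subsetP CD y yC)).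
have cls x : [set y | connect (mcf_adj P m) x y] = pblock (P m) x.
  apply/setP => y; rewrite inE; apply/idP/idP.
  - case/connectP => p pth ->.
    elim: p x pth => [|z p IH] x /=; first by rewrite mem_pblock cov.
    case/andP => axz pth; rewrite (adjb _ _ axz); exact: IH.
  - move=> yx; apply: conn_same.
    by rewrite (def_pblock (triv m) (pblock_mem (cov m x)) yx).
apply/setP => B; apply/imsetP/idP.
- by case=> x _ ->; rewrite cls pblock_mem ?cov.
- move=> BP.
  have : B != set0 by apply/negP => /eqP e; case/and3P: (hP m) => _ _; rewrite -e BP.
  case/set0Pn => x xB; exists x => //; by rewrite cls (def_pblock (triv m) BP xB).
Qed.

Lemma card_comp (m : 'I_n.+1) : #|mcf_components P m| = #|P m| ->
  forall l : 'I_n.+1, (l <= m)%N -> refines (P l) (P m).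
Proof.
move=> hc.
pose h (B : {set T}) := [set y | [exists x in B, connect (mcf_adj P m) x y]].
have csym := sym_connect_sym (adj_sym m).
have hB B x : B \in P m -> x \in B -> h B = [set y | connect (mcf_adj P m) x y].
  move=> BP xB; apply/setP => y; rewrite !inE; apply/existsP/idP.
  - case=> x' /andP [x'B cy]; apply: connect_trans cy.
    by apply: conn_same; rewrite (def_pblock (triv m) BP xB) (def_pblock (triv m) BP x'B).
  - by move=> cy; exists x; rewrite xB.
have himg : mcf_components P m = h @: P m.
  apply/setP => S; apply/imsetP/imsetP.
  - case=> x _ ->; exists (pblock (P m) x); first by rewrite pblock_mem ?cov.
    by rewrite (hB _ x) ?pblock_mem ?mem_pblock ?cov.
  - case=> B BP ->.
    have : B != set0 by apply/negP => /eqP e; case/and3P: (hP m) => _ _; rewrite -e BP.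
    by case/set0Pn => x xB; exists x => //; rewrite (hB _ x).
have inj : {in P m &, injective h}.
  by apply/imset_injP; rewrite -himg hc.
move=> l lm C CP.
have : C != set0 by apply/negP => /eqP e; case/and3P: (hP l) => _ _; rewrite -e CP.
case/set0Pn => x xC.
exists (pblock (P m) x); first by rewrite pblock_mem ?cov.
apply/subsetP => y yC.
have axy : mcf_adj P m x y.
  apply/existsP; exists l; rewrite lm /=; apply/existsP; exists C; by rewrite CP xC yC.
have e : pblock (P m) y = pblock (P m) x.
  apply: inj; rewrite ?pblock_mem ?cov //.
  rewrite (hB _ y) ?pblock_mem ?mem_pblock ?cov // (hB _ x) ?pblock_mem ?mem_pblock ?cov //.
  apply/setP => z; rewrite !inE; apply/idP/idP => c.
  - exact: connect_trans (connect1 axy) c.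
  - apply: connect_trans _ c; rewrite csym; exact: connect1.
by rewrite -e mem_pblock cov.
Qed.

Lemma cardP_gt0 (m : 'I_n.+1) : (0 < #|T|)%N -> (0 < #|P m|)%N.
Proof.
move=> /card_gt0P [x _]; apply/card_gt0P; exists (pblock (P m) x).
by rewrite pblock_mem ?cov.
Qed.

End Aux.

Lemma refines_trans (T : finType) (A B C : {set {set T}}) :
  refines A B -> refines B C -> refines A C.
Proof.
move=> hab hbc X XA; have [Y YB XY] := hab X XA; have [Z ZC YZ] := hbc Y YB.
by exists Z => //; apply: subset_trans YZ.
Qed.

Lemma refines_refl (T : finType) (A : {set {set T}}) : refines A A.
Proof. by move=> X XA; exists X. Qed.

Theorem corollary1 (R : realType) (T : finType) (n : nat)
    (t : 'I_n.+1 -> R) (P : 'I_n.+1 -> {set {set T}}) :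
  (0 < #|T|)%N ->
  (forall i j : 'I_n.+1, (i < j)%N -> t i < t j) ->
  (forall i, partition (P i) [set: T]) ->
  (forall x : R, t ord0 <= x -> hier t P x = 1) <->
  (forall i : 'I_n, refines (P (inord i)) (P (inord i.+1))).
Proof.
move=> T0 tmono hP; split.
- move=> hh i.
  have hi : (i < n.+1)%N by apply: ltnW (ltn_ord i).
  have hi1 : (i.+1 < n.+1)%N by rewrite ltnS ltn_ord.
  pose m : 'I_n.+1 := inord i.+1.
  have mv : (m : nat) = i.+1 by rewrite inordK.
  have cm : cur_idx t (t m) = m.
    rewrite /cur_idx; apply: val_inj => /=; rewrite inordK; last first.
      rewrite ltnS; apply/bigmax_leqP => j _; by rewrite -ltnS ltn_ord.
    apply/eqP; rewrite eqn_leq; apply/andP; split.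
    + apply/bigmax_leqP => j tj; rewrite leqNgt; apply/negP => mj.
      by have := tmono _ _ mj; rewrite ltNge tj.
    + have := @leq_bigmax_cond _ (fun j : 'I_n.+1 => t j <= t m) (fun j : 'I_n.+1 => (j : nat)) m.
      by rewrite lexx; apply.
  have h0 : t ord0 <= t m.
    by apply: ltW; apply: tmono; rewrite mv.
  have := hh _ h0; rewrite /hier /beta0 /nclusters cm => e.
  have hc : #|mcf_components P m| = #|P m|.
    have nz : (#|P m|%:R : R) != 0 by rewrite pnatr_eq0 -lt0n (@cardP_gt0 T n P hP).
    have := congr1 (fun z => z * (#|P m|%:R : R)) e; rewrite /= mul1r divfK //.
    by move/eqP; rewrite eqr_nat => /eqP.
  apply: (@card_comp T n P hP m hc (inord i)); by rewrite mv inordK.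
- move=> href x _.
  set m := cur_idx t x.
  have gen : forall a b, (a <= b)%N -> (b < n.+1)%N -> refines (P (inord a)) (P (inord b)).
    move=> a; elim=> [|b IH] ab bn.
      by rewrite leqn0 in ab; rewrite (eqP ab); apply: refines_refl.
    rewrite leq_eqVlt in ab; case/orP: ab => [/eqP -> | ab]; first exact: refines_refl.
    apply: refines_trans (IH ab (ltnW bn)) _.
    exact: (href (Ordinal (bn : (b < n)%N))).
  have hr : forall l : 'I_n.+1, (l <= m)%N -> refines (P l) (P m).
    move=> l lm; have := gen l m lm (ltn_ord m); by rewrite !inord_val.
  rewrite /hier /beta0 /nclusters -/m (@comp_P T n P hP m hr) divff //.
  by rewrite pnatr_eq0 -lt0n (@cardP_gt0 T n P hP).
Qed.
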